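(* Let $D,D'\in\mathcal{D}_1$ be persistence measures. Then \[ \|\beta_k(D)-\beta_k(D')\|_{L^1(\mathbb{R})}\le 2\,d_1(D,D'). \]
   Context: $\overline{\mathcal{X}}=\{(x,y)\in\mathbb{R}^2:y\le x\}$, $\mathcal{X}=\{y<x\}$, $\Delta$ the diagonal. $\mathbb{R}^2$ carries the metric $d_\infty((x,y),(x',y'))=\max\{|x-x'|,|y-y'|\}$, and $d_\infty((x,y),\Delta)=\frac12|y-x|$. $\mathcal{D}_1$ is the set of Radon measures $\mu$ on $\overline{\mathcal{X}}$ with $\int d_\infty(z,\Delta)\,d\mu(z)<\infty$. $d_1(\mu,\nu)=\inf_\pi\int_{\overline{\mathcal{X}}^2}d_\infty(z,w)\,d\pi(z,w)$ over Radon measures $\pi$ on $\overline{\mathcal{X}}^2$ with $\pi(A\times\overline{\mathcal{X}})=\mu(A)$ and $\pi(\overline{\mathcal{X}}\times B)=\nu(B)$ for all Borel $A,B\subset\mathcal{X}$. For $x\in\mathbb{R}$, $R_x=[x,\infty[\times]-\infty,x]$, and for a persistence measure $D$, $\beta_k(D)(x)=D(R_x)$ (the index $k$ refers to the homological degree the diagram comes from). *)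

(* Defs.v *)
From HB Require Import structures.
From mathcomp Require Import all_boot all_order all_algebra.
From mathcomp Require Import all_classical all_reals all_analysis.
Set Implicit Arguments. Unset Strict Implicit. Unset Printing Implicit Defensive.
Import Order.TTheory GRing.Theory Num.Theory.
Import numFieldNormedType.Exports.
Local Open Scope classical_set_scope.
Local Open Scope ring_scope.

Section Persistence.
Variable R : realType.

Definition Xbar : set (R * R) := [set z | z.2 <= z.1].
Definition Xopen : set (R * R) := [set z | z.2 < z.1].

Definition dinf (z w : R * R) : R := Num.max `|z.1 - w.1| `|z.2 - w.2|.
Definition ddiag (z : R * R) : R := `|z.2 - z.1| / 2.

(* Radon measure on Xbar: a Borel measure on R^2 (product sigma-algebra =
   Borel sigma-algebra of R^2) carried by Xbar and finite on compact sets
   (locally finite Borel measures on R^n are automatically regular). *)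

Definition is_radon_Xbar (mu : {measure set (R * R) -> \bar R}) : Prop :=
  mu (~` Xbar) = 0%E /\
  (forall K : set (R * R), compact K -> (mu K < +oo)%E).

Definition in_D1 (mu : {measure set (R * R) -> \bar R}) : Prop :=
  is_radon_Xbar mu /\
  (\int[mu]_(z in Xbar) (ddiag z)%:E < +oo)%E.

Definition Xbar2 : set ((R * R) * (R * R)) := Xbar `*` Xbar.

Definition plan (mu nu : {measure set (R * R) -> \bar R})
  (pi : {measure set ((R * R) * (R * R)) -> \bar R}) : Prop :=
  pi (~` Xbar2) = 0%E /\
  (forall K : set ((R * R) * (R * R)), compact K -> (pi K < +oo)%E) /\
  (forall A : set (R * R), measurable A -> A `<=` Xopen ->
     pi (A `*` Xbar) = mu A) /\
  (forall B : set (R * R), measurable B -> B `<=` Xopen ->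
     pi (Xbar `*` B) = nu B).

Definition d1 (mu nu : {measure set (R * R) -> \bar R}) : \bar R :=
  ereal_inf [set c | exists pi, plan mu nu pi /\
     c = (\int[pi]_(w in Xbar2) (dinf w.1 w.2)%:E)%E].

Definition Rx (x : R) : set (R * R) := `[x, +oo[%classic `*` `]-oo, x]%classic.

Definition betti (D : {measure set (R * R) -> \bar R}) (x : R) : \bar R :=
  D (Rx x).

End Persistence.

(* Main.v *)
Require Import Defs.
From HB Require Import structures.
From mathcomp Require Import all_boot all_order all_algebra.
From mathcomp Require Import all_classical all_reals all_analysis.
From mathcomp Require Import measurable_realfun.
From mathcomp Require Import lra.
Import Order.TTheory GRing.Theory Num.Theory.
Import numFieldNormedType.Exports.
Local Open Scope classical_set_scope.
Local Open Scope ring_scope.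
Section G.
Context d (T : measurableType d) (R : realType).
Lemma le_int_nm (mu : {measure set T -> \bar R}) (f1 f2 : T -> \bar R) :
  (forall x, (0 <= f1 x)%E) -> (forall x, (f1 x <= f2 x)%E) ->
  (\int[mu]_x f1 x <= \int[mu]_x f2 x)%E.
Proof.
move=> f10 f12.
have f20 x : (0 <= f2 x)%E by exact: le_trans (f10 x) (f12 x).
rewrite !ge0_integralTE//.
apply: ge_ereal_sup => _ [h hf1 <-]; apply: ereal_sup_ubound => /=.
exists h => // x; exact: le_trans (hf1 x) (f12 x).
Qed.

Variable (mu : {measure set T -> \bar R}) (hmu : sigma_finite setT mu).
Definition sfm : set T -> \bar R := let _ := hmu in mu.
HB.instance Definition _ := Measure.on sfm.
HB.instance Definition _ := Measure_isSigmaFinite.Build _ _ _ sfm hmu.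
End G.
Arguments sfm {d T R} mu hmu.

Section T.
Variable R : realType.
Local Notation T2 := (R * R)%type.
Local Notation T4 := (T2 * T2)%type.
Definition box (n : nat) : set T2 := `[- n%:R, n%:R] `*` `[- n%:R, n%:R].
Lemma box_meas n : measurable (box n).
Proof. by apply: measurableX; exact: measurable_itv. Qed.
Lemma box_compact n : compact (box n).
Proof. by apply: compact_setX; exact: segment_compact. Qed.
Lemma box_cover (z : T2) : exists n, box n z.
Proof.
exists (Num.bound (`|z.1| + `|z.2|)).
have h := @archi_boundP R (`|z.1| + `|z.2|) (addr_ge0 (normr_ge0 _) (normr_ge0 _)).
set N := (_ %:R) in h *.
have h1 : `|z.1| <= N by apply: le_trans (ltW h); rewrite lerDl.
have h2 : `|z.2| <= N by apply: le_trans (ltW h); rewrite lerDr.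
by split; rewrite /= in_itv /= -ler_norml.
Qed.
Lemma box_le n m : (n <= m)%N -> box n `<=` box m.
Proof.
move=> nm z [/=]; rewrite !in_itv /= => /andP[a b] /andP[c e].
have N : n%:R <= m%:R :> R by rewrite ler_nat.
by split; rewrite /= in_itv /=; apply/andP; split; lra.
Qed.
Lemma sf2 (mu : {measure set T2 -> \bar R}) :
  (forall K, compact K -> (mu K < +oo)%E) -> sigma_finite setT mu.
Proof.
move=> hK; exists box.
  by apply/seteqP; split => z // _; have [n hn] := box_cover z; exists n.
by move=> n; split; [exact: box_meas | exact: hK (box_compact n)].
Qed.
Lemma sf4 (mu : {measure set T4 -> \bar R}) :
  (forall K, compact K -> (mu K < +oo)%E) -> sigma_finite setT mu.
Proof.
move=> hK; exists (fun n => box n `*` box n).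
  apply/seteqP; split => w // _.
  have [n hn] := box_cover w.1; have [m hm] := box_cover w.2.
  exists (n + m)%N => //.
  by split; [exact: (@box_le n (n+m) (leq_addr m n) _ hn) | exact: (@box_le m (n+m) (leq_addl n m) _ hm)].
move=> n; split; first by apply: measurableX; exact: box_meas.
by apply: hK; apply: compact_setX; exact: box_compact.
Qed.
Local Notation L := (measurableTypeR R).

Lemma mset d (T : measurableType d) (b : T -> bool) : measurable_fun setT b ->
  measurable [set p | b p].
Proof.
move=> mb; have := mb measurableT [set true] I.
by rewrite setTI; congr measurable; apply/seteqP; split => p /=.
Qed.

Definition inAb (x : R) (z : T2) : bool := (x <= z.1) && (z.2 <= x) && (z.2 < z.1).
Definition xbb (z : T2) : bool := z.2 <= z.1.
Definition Eb (p : L * T4) : bool :=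
  xbb p.2.1 && xbb p.2.2 &&
  ((inAb p.1 p.2.1 && ~~ inAb p.1 p.2.2) || (~~ inAb p.1 p.2.1 && inAb p.1 p.2.2)).
Definition Db (p : L * T2) : bool := (p.1 <= p.2.1) && (p.2.2 <= p.1) && (p.2.1 <= p.2.2).

Lemma m_inAb d (T : measurableType d) (f : T -> R) (g : T -> T2) :
  measurable_fun setT f -> measurable_fun setT g -> measurable_fun setT (fun t => inAb (f t) (g t)).
Proof.
move=> mf mg.
have m1 : measurable_fun setT (fun t => (g t).1) by exact: measurableT_comp.
have m2 : measurable_fun setT (fun t => (g t).2) by exact: measurableT_comp.
by apply: measurable_and; [apply: measurable_and|]; apply: measurable_fun_ler || apply: measurable_fun_ltr.
Qed.

Lemma m_xbb d (T : measurableType d) (g : T -> T2) :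
  measurable_fun setT g -> measurable_fun setT (fun t => xbb (g t)).
Proof.
move=> mg.
have m1 : measurable_fun setT (fun t => (g t).1) by exact: measurableT_comp.
have m2 : measurable_fun setT (fun t => (g t).2) by exact: measurableT_comp.
exact: measurable_fun_ler.
Qed.

Lemma mEb : measurable_fun setT Eb.
Proof.
have h1 : measurable_fun setT (fun p : L * T4 => (p.1 : R)) by exact: measurable_fst.
have h21 : measurable_fun setT (fun p : L * T4 => p.2.1).
  by apply: measurableT_comp; [exact: measurable_fst| exact: measurable_snd].
have h22 : measurable_fun setT (fun p : L * T4 => p.2.2).
  by apply: measurableT_comp; [exact: measurable_snd| exact: measurable_snd].
have a1 := @m_inAb _ _ _ _ h1 h21; have a2 := @m_inAb _ _ _ _ h1 h22.
apply: measurable_and; first by apply: measurable_and; exact: m_xbb.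
apply: measurable_or; apply: measurable_and => //; exact: measurable_neg.
Qed.

Lemma mDb : measurable_fun setT Db.
Proof.
have h1 : measurable_fun setT (fun p : L * T2 => (p.1 : R)) by exact: measurable_fst.
have h21 : measurable_fun setT (fun p : L * T2 => p.2.1).
  by apply: measurableT_comp; [exact: measurable_fst| exact: measurable_snd].
have h22 : measurable_fun setT (fun p : L * T2 => p.2.2).
  by apply: measurableT_comp; [exact: measurable_snd| exact: measurable_snd].
by apply: measurable_and; [apply: measurable_and|]; exact: measurable_fun_ler.
Qed.
Lemma leb2 (a c : R) : (lebesgue_measure (`[a, c]%classic : set R) + lebesgue_measure (`[c, a]%classic : set R) = `|a - c|%:E)%E.
Proof.
rewrite !lebesgue_measure_itv /= !lte_fin.
have [ac|ca|->] := ltgtP a c.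
- rewrite adde0 -EFinD; congr EFin.
  by rewrite distrC ger0_norm // subr_ge0 ltW.
- rewrite add0e -EFinD; congr EFin.
  by rewrite ger0_norm // subr_ge0 ltW.
- by rewrite subrr normr0 adde0.
Qed.
Lemma leb_sec (w : T4) :
  (lebesgue_measure [set x : L | Eb (x, w)] <= (2 * dinf w.1 w.2)%:E)%E.
Proof.
case: w => [[b d] [b' d']].
set I1 := (`[d, d']%classic : set R). set I2 := (`[d', d]%classic : set R).
set I3 := (`[b', b]%classic : set R). set I4 := (`[b, b']%classic : set R).
have sub : [set x : L | Eb (x, ((b, d), (b', d')))] `<=` ((I1 `|` I2) `|` (I3 `|` I4)).
  move=> x /=; rewrite /Eb /inAb /= => /andP[_ /orP[/andP[h1 h2]|/andP[h1 h2]]].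
  - move/andP: h1 => [/andP[xb dx] db].
    have [xd'|d'x] := leP x d'.
      by left; left; rewrite /I1 /= in_itv /= dx xd'.
    have [b'x|xb'] := leP b' x.
      by right; left; rewrite /I3 /= in_itv /= b'x xb.
    by move: h2; rewrite (ltW xb') (ltW d'x) (lt_trans d'x xb').
  - move/andP: h2 => [/andP[xb dx] db].
    have [xd'|d'x] := leP x d.
      by left; right; rewrite /I2 /= in_itv /= dx xd'.
    have [b'x|xb'] := leP b x.
      by right; right; rewrite /I4 /= in_itv /= b'x xb.
    by move: h1; rewrite (ltW xb') (ltW d'x) (lt_trans d'x xb').
have mI (a c : R) : @measurable _ L (`[a, c]%classic : set R) by exact: measurable_itv.
have mU : @measurable _ L ((I1 `|` I2) `|` (I3 `|` I4)).
  by apply: measurableU; apply: measurableU; exact: mI.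
have mS : @measurable _ L [set x : L | Eb (x, ((b, d), (b', d')))].
  by apply: mset; apply: (measurableT_comp mEb); apply: measurable_fun_pair.
apply: (le_trans (le_measure _ (mem_set mS) (mem_set mU) sub)).
apply: (le_trans (measureU2 _ _ _)); [by apply: measurableU; exact: mI|by apply: measurableU; exact: mI|].
apply: (le_trans (leeD (measureU2 _ (mI _ _) (mI _ _)) (measureU2 _ (mI _ _) (mI _ _)))).
rewrite leb2 leb2 -EFinD lee_fin /dinf /=.
rewrite mulr2n mulrDl mul1r; apply: lerD.
  by rewrite distrC le_max lexx orbT.
by rewrite distrC le_max lexx.
Qed.
Lemma leb_diag (z : T2) : lebesgue_measure [set x : L | Db (x, z)] = 0%E.
Proof.
have mS : @measurable _ L [set x : L | Db (x, z)].
  by apply: mset; apply: (measurableT_comp mDb); apply: measurable_fun_pair.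
have sub : [set x : L | Db (x, z)] `<=` [set z.1].
  move=> x /=; rewrite /Db /= => /andP[/andP[h1 h2] h3].
  by apply/eqP; rewrite eq_le h1 (le_trans h3 h2).
apply/eqP; rewrite -measure_le0.
rewrite -(lebesgue_measure_set1 z.1).
exact: (le_measure _ (mem_set mS) (mem_set (measurable_set1 z.1)) sub).
Qed.

Lemma mXbar : measurable (@Xbar R).
Proof. by apply: mset; apply: m_xbb. Qed.
Lemma mXopen : measurable (@Xopen R).
Proof.
apply: mset (fun z : T2 => z.2 < z.1) _.
by apply: measurable_fun_ltr; [exact: measurable_snd|exact: measurable_fst].
Qed.
Lemma mRx (x : R) : measurable (Rx x).
Proof. by apply: measurableX; exact: measurable_itv. Qed.

Lemma mddiag : measurable_fun setT (fun z : T2 => (ddiag z)%:E).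
Proof.
apply/measurable_EFinP; rewrite /ddiag.
apply: measurable_funM => //.
apply: measurableT_comp => //.
by apply: measurable_funB; [exact: measurable_snd|exact: measurable_fst].
Qed.

Lemma betti_fin (D : {measure set T2 -> \bar R}) (HD : in_D1 D) (x : R) :
  (D (Rx x) < +oo)%E.
Proof.
case: HD => [[_ hK] hint].
set K := (`[x - 1, x + 1]%classic : set R) `*` (`[x - 1, x + 1]%classic : set R).
set G := [set z : T2 | 1 <= z.1 - z.2].
have mK : measurable K by apply: measurableX; exact: measurable_itv.
have mG : measurable G.
  apply: mset (fun z : T2 => 1 <= z.1 - z.2) _.
  apply: measurable_fun_ler => //.
  by apply: measurable_funB; [exact: measurable_fst|exact: measurable_snd].
have sub : Rx x `<=` K `|` G.
  move=> [b d]; rewrite /Rx /= !in_itv /= andbT => -[xb dx].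
  have [h|h] := leP (b - d) 1.
    by left; split; rewrite /= in_itv /=; apply/andP; split; lra.
  by right; rewrite /G /=; lra.
have GX : G `<=` @Xbar R by move=> [b d]; rewrite /G /Xbar /=; lra.
have KG : (D G < +oo)%E.
  have h1 : (\int[D]_(z in G) (cst (2^-1 : R)%:E) z <= \int[D]_(z in G) (ddiag z)%:E)%E.
    apply: ge0_le_integral => //.
    - by move=> z _; rewrite lee_fin.
    - by apply: (measurable_funS measurableT) => //; exact: mddiag.
    - move=> [b d]; rewrite /G /ddiag /= => h; rewrite lee_fin.
      rewrite distrC ger0_norm; last lra.
      by rewrite ler_pdivlMr //; lra.
  have h2 : (\int[D]_(z in G) (ddiag z)%:E <= \int[D]_(z in @Xbar R) (ddiag z)%:E)%E.
    apply: ge0_subset_integral => //; first exact: mXbar.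
    - by apply: (measurable_funS measurableT) => //; exact: mddiag.
    - by move=> z _; rewrite lee_fin /ddiag; apply: divr_ge0.
  rewrite integral_cst // in h1.
  have h3 := le_lt_trans (le_trans h1 h2) hint.
  move: h3; case: (D G) => //; first by move=> r _; rewrite ltry.
  by rewrite gt0_muley ?lte_fin ?invr_gt0 // ltxx.
have mKG : measurable (K `|` G) by exact: measurableU.
apply: (le_lt_trans (le_measure D (mem_set (mRx x)) (mem_set mKG) sub)).
apply: (le_lt_trans (measureU2 _ mK mG)).
rewrite lte_add_pinfty //.
apply: hK; apply: compact_setX; exact: segment_compact.
Qed.
Lemma indic_sec d1 d2 (T1 : measurableType d1) (U : measurableType d2) (P : T1 * U -> bool) x w :
  (\1_[set p | P p] (x, w) : R) = \1_[set w' | P (x, w')] w.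
Proof. by rewrite !indicE; congr (_ %:R); apply/idP/idP; rewrite !inE. Qed.

Lemma int_sec d2 (U : measurableType d2) (m : {measure set U -> \bar R}) (P : L * U -> bool)
  (mP : measurable_fun setT P) (x : L) :
  (\int[m]_w (\1_[set p | P p] (x, w) : R)%:E = m [set w | P (x, w)])%E.
Proof.
under eq_integral do rewrite indic_sec.
rewrite integral_indic ?setIT //.
by apply: mset; apply: (measurableT_comp mP); apply: measurable_fun_pair.
Qed.

Lemma int_sec2 d2 (U : measurableType d2) (P : L * U -> bool)
  (mP : measurable_fun setT P) (w : U) :
  (\int[lebesgue_measure]_x (\1_[set p | P p] (x, w) : R)%:E = lebesgue_measure [set x : L | P (x, w)])%E.
Proof.
have -> : (fun x : L => (\1_[set p | P p] (x, w) : R)%:E) = (fun x => (\1_[set x : L | P (x, w)] x : R)%:E).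
  by apply/funext => x; rewrite !indicE; congr (_ %:R)%:E; apply/idP/idP; rewrite !inE.
rewrite integral_indic ?setIT //.
by apply: mset; apply: (measurableT_comp mP); apply: measurable_fun_pair.
Qed.
Lemma abs_le (u v e a a' : \bar R) : u \is a fin_num -> v \is a fin_num ->
  (0 <= e)%E -> (0 <= a)%E -> (0 <= a')%E ->
  (u <= v + e + a)%E -> (v <= u + e + a')%E -> (`|u - v| <= e + a + a')%E.
Proof.
move: u v e a a' => [u| |] // [v| |] // [e| |] // [a| |] // [a'| |] //= _ _;
  rewrite ?lee_fin ?leey //.
move=> e0 a0 a'0 h1 h2.
rewrite ler_norml; apply/andP; split; lra.
Qed.

Lemma chain (mu1 mu2 : {measure set T2 -> \bar R}) (x : R) e :
  (mu1 [set z | inAb x z] <= mu2 [set z | inAb x z] + e)%E ->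
  (mu1 (Rx x) <= mu2 (Rx x) + e + mu1 [set z | Db (x, z)])%E.
Proof.
move=> h.
have mA : measurable [set z | inAb x z].
  by apply: mset; apply: (@m_inAb _ _ (fun=> x) idfun) => //; exact: measurable_id.
have mDx : measurable [set z : T2 | Db (x, z)].
  by apply: mset; apply: (measurableT_comp mDb); apply: measurable_fun_pair.
have sub : Rx x `<=` [set z | inAb x z] `|` [set z | Db (x, z)].
  move=> [b d]; rewrite /Rx /= !in_itv /= andbT => -[xb dx].
  have [db|bd] := ltP d b.
    by left; rewrite /inAb /= xb dx db.
  by right; rewrite /Db /= xb dx bd.
have AR : [set z | inAb x z] `<=` Rx x.
  move=> [b d]; rewrite /inAb /Rx /= !in_itv /= andbT => /andP[/andP[xb dx] _].
  by split.
have mU : measurable ([set z | inAb x z] `|` [set z | Db (x, z)]) by apply: measurableU; [exact: mA| exact: mDx].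
apply: (le_trans (le_measure _ (mem_set (mRx x)) (mem_set mU) sub)).
apply: (le_trans (measureU2 _ mA mDx)).
apply: leeD => //.
apply: (le_trans h); apply: leeD => //.
exact: (le_measure _ (mem_set mA) (mem_set (mRx x)) AR).
Qed.
Lemma mA (x : R) : measurable [set z | inAb x z].
Proof. by apply: mset; apply: (@m_inAb _ _ (fun=> x) idfun) => //; exact: measurable_id. Qed.
Lemma AXo (x : R) : [set z | inAb x z] `<=` @Xopen R.
Proof. by move=> [b d]; rewrite /inAb /Xopen /= => /andP[_ ->]. Qed.
Lemma mEx (x : R) : measurable [set w : T4 | Eb (x, w)].
Proof. by apply: mset; apply: (measurableT_comp mEb); apply: measurable_fun_pair. Qed.

Lemma piA (D D' : {measure set T2 -> \bar R}) (pi : {measure set T4 -> \bar R})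
  (hp : plan D D' pi) (x : R) :
  (D [set z | inAb x z] <= D' [set z | inAb x z] + pi [set w : T4 | Eb (x, w)])%E /\
  (D' [set z | inAb x z] <= D [set z | inAb x z] + pi [set w : T4 | Eb (x, w)])%E.
Proof.
case: hp => _ [_ [hm1 hm2]].
rewrite -(hm1 _ (mA x) (@AXo x)) -(hm2 _ (mA x) (@AXo x)).
have m1 : measurable ([set z | inAb x z] `*` @Xbar R) by apply: measurableX; [exact: mA|exact: mXbar].
have m2 : measurable (@Xbar R `*` [set z | inAb x z]) by apply: measurableX; [exact: mXbar|exact: mA].
have mE := mEx x.
have mU1 : measurable ((@Xbar R `*` [set z | inAb x z]) `|` [set w : T4 | Eb (x, w)]) by apply: measurableU.
have mU2 : measurable (([set z | inAb x z] `*` @Xbar R) `|` [set w : T4 | Eb (x, w)]) by apply: measurableU.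
split.
- have sub : [set z | inAb x z] `*` @Xbar R `<=` (@Xbar R `*` [set z | inAb x z]) `|` [set w : T4 | Eb (x, w)].
    move=> [z z'] [/= hz hz'].
    case hA : (inAb x z').
      left; split => //=.
      by move: hz; rewrite /inAb /Xbar => /andP[_ /ltW].
    right; rewrite /Eb /= hz hA /xbb /= andbT.
    move: hz'; rewrite /Xbar /= => ->; rewrite andbT.
    by move: hz; rewrite /inAb => /andP[_ /ltW].
  apply: (le_trans (le_measure _ (mem_set m1) (mem_set mU1) sub)).
  exact: measureU2.
- have sub : @Xbar R `*` [set z | inAb x z] `<=` ([set z | inAb x z] `*` @Xbar R) `|` [set w : T4 | Eb (x, w)].
    move=> [z z'] [/= hz hz'].
    case hA : (inAb x z).
      left; split => //=.
      by move: hz'; rewrite /inAb /Xbar => /andP[_ /ltW].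
    right; rewrite /Eb /= hz' hA /xbb /= andbT.
    move: hz; rewrite /Xbar /= => ->; rewrite /=.
    by move: hz'; rewrite /inAb => /andP[_ /ltW].
  apply: (le_trans (le_measure _ (mem_set m2) (mem_set mU2) sub)).
  exact: measureU2.
Qed.
Lemma main_plan (D D' : {measure set T2 -> \bar R}) (HD : in_D1 D) (HD' : in_D1 D')
  (pi : {measure set T4 -> \bar R}) (hp : plan D D' pi) :
  (\int[lebesgue_measure]_x `|betti D x - betti D' x| <=
     2%:E * \int[pi]_(w in @Xbar2 R) (dinf w.1 w.2)%:E)%E.
Proof.
have hsD := @sf2 D HD.1.2; have hsD' := @sf2 D' HD'.1.2; have hspi := @sf4 pi hp.2.1.
pose f := fun p : L * T4 => (\1_[set p | Eb p] p : R)%:E.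
pose g := fun p : L * T2 => (\1_[set p | Db p] p : R)%:E.
have mf : measurable_fun setT f.
  by apply/measurable_EFinP; apply: measurable_indic; apply: mset; exact: mEb.
have mg : measurable_fun setT g.
  by apply/measurable_EFinP; apply: measurable_indic; apply: mset; exact: mDb.
have f0 p : (0 <= f p)%E by rewrite lee_fin.
have g0 p : (0 <= g p)%E by rewrite lee_fin.
pose M := fun x : L => (\int[sfm pi hspi]_w f (x, w))%E.
pose a := fun x : L => (\int[sfm D hsD]_z g (x, z))%E.
pose a' := fun x : L => (\int[sfm D' hsD']_z g (x, z))%E.
have mM : measurable_fun setT M := measurable_fun_fubini_tonelli_F f mf f0.
have ma : measurable_fun setT a := measurable_fun_fubini_tonelli_F g mg g0.
have ma' : measurable_fun setT a' := measurable_fun_fubini_tonelli_F g mg g0.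
have M0 x : (0 <= M x)%E by apply: integral_ge0.
have a0 x : (0 <= a x)%E by apply: integral_ge0.
have a'0 x : (0 <= a' x)%E by apply: integral_ge0.
have step1 : (\int[lebesgue_measure]_x `|betti D x - betti D' x| <=
              \int[lebesgue_measure]_x (M x + a x + a' x))%E.
  apply: le_int_nm => // x.
  have -> : M x = pi [set w : T4 | Eb (x, w)] by exact: (@int_sec _ _ _ _ mEb x).
  have -> : a x = D [set z : T2 | Db (x, z)] by exact: (@int_sec _ _ _ _ mDb x).
  have -> : a' x = D' [set z : T2 | Db (x, z)] by exact: (@int_sec _ _ _ _ mDb x).
  have [h1 h2] := @piA D D' pi hp x.
  apply: abs_le.
  - by rewrite ge0_fin_numE //; exact: betti_fin.
  - by rewrite ge0_fin_numE //; exact: betti_fin.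
  - by [].
  - by [].
  - by [].
  - exact: (@chain D D' x _ h1).
  - exact: (@chain D' D x _ h2).
have step2 : (\int[lebesgue_measure]_x (M x + a x + a' x) =
   \int[lebesgue_measure]_x M x + \int[lebesgue_measure]_x a x + \int[lebesgue_measure]_x a' x)%E.
  rewrite ge0_integralD //.
  - by rewrite ge0_integralD.
  - by move=> x _; exact: adde_ge0.
  - exact: emeasurable_funD.
have adiag (mu : {measure set T2 -> \bar R}) (hs : sigma_finite setT mu) :
    (\int[lebesgue_measure]_x (\int[sfm mu hs]_z g (x, z)) = 0)%E.
  rewrite (fubini_tonelli g mg g0).
  apply: integral0_eq => z _.
  by rewrite (@int_sec2 _ _ _ mDb) leb_diag.
have stepM : (\int[lebesgue_measure]_x M x <=
     2%:E * \int[pi]_(w in @Xbar2 R) (dinf w.1 w.2)%:E)%E.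
  rewrite /M (fubini_tonelli f mf f0).
  have -> : (2%:E * \int[pi]_(w in @Xbar2 R) (dinf w.1 w.2)%:E)%E =
      (\int[sfm pi hspi]_w (((fun w : T4 => (2 * dinf w.1 w.2)%:E) \_ (@Xbar2 R)) w))%E.
    rewrite -integral_mkcond.
    under eq_integral do rewrite EFinM.
    rewrite ge0_integralZl_EFin //.
    - by apply: measurableX; exact: mXbar.
    - by move=> w _; rewrite lee_fin /dinf le_max normr_ge0.
    - apply/measurable_EFinP; apply: (measurable_funS measurableT) => //.
      rewrite /dinf; apply: measurable_maxr.
      + apply: measurableT_comp => //; apply: measurable_funB.
        * by apply: measurableT_comp; [exact: measurable_fst|exact: measurable_fst].
        * by apply: measurableT_comp; [exact: measurable_fst|exact: measurable_snd].
      + apply: measurableT_comp => //; apply: measurable_funB.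
        * by apply: measurableT_comp; [exact: measurable_snd|exact: measurable_fst].
        * by apply: measurableT_comp; [exact: measurable_snd|exact: measurable_snd].
  apply: le_int_nm => [w|w]; first by apply: integral_ge0.
  rewrite (@int_sec2 _ _ _ mEb) /patch; case: ifPn => hw.
    exact: leb_sec.
  have -> : [set x : L | Eb (x, w)] = set0.
    apply/seteqP; split => // x /=; rewrite /Eb => /andP[/andP[h1 h2] _].
    by move: hw; rewrite notin_setE; apply; split.
  by rewrite measure0.
rewrite (le_trans step1) // step2 adiag adiag !adde0.
exact: stepM.
Qed.
Lemma half_le (I c : \bar R) : (0 <= I)%E -> (0 <= c)%E -> (I <= 2%:E * c)%E ->
  (I * (2^-1)%:E <= c)%E.
Proof.
move: I c => [i| |] [c| |] //=; rewrite ?leey //.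
move=> i0 c0; rewrite (_ : (2 : \bar R) = (2%:R)%:E)%E // -EFinM !lee_fin => h.
lra.
Qed.
Lemma twice_half (I : \bar R) : (0 <= I)%E -> I = (2%:E * (I * (2^-1)%:E))%E.
Proof.
move: I => [i| |] //= _.
- rewrite (_ : (2 : \bar R) = (2%:R)%:E)%E // -!EFinM; congr EFin.
  by rewrite mulrCA mulfV ?mulr1 // pnatr_eq0.
- by rewrite gt0_mulye ?lte_fin ?invr_gt0 // gt0_muley.
Qed.
End T.

Local Open Scope ereal_scope.

Theorem mainTheorem7 (R : realType)
  (D D' : {measure set (R * R) -> \bar R})
  (HD : in_D1 D) (HD' : in_D1 D') :
  \int[lebesgue_measure]_x `|betti D x - betti D' x| <= 2%:E * d1 D D'.
Proof.
set I := \int[lebesgue_measure]_x _.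
have I0 : 0 <= I by apply: integral_ge0 => x _; exact: abse_ge0.
have lb : I * (2^-1)%:E <= d1 D D'.
  apply: le_ereal_inf_tmp => _ [pi [hp ->]].
  apply: half_le => //.
  - apply: integral_ge0 => w _; rewrite lee_fin /dinf le_max normr_ge0 //.
  - exact: main_plan.
rewrite (@twice_half R I I0).
by apply: lee_wpmul2l.
Qed.
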